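(* For every base $\mathscr{B}$ and IPL formulas $\varphi,\psi,\chi$: if $\Vdash^{*}_{\mathscr{B}}\varphi\wedge\psi$ and $\varphi,\psi\Vdash^{*}_{\mathscr{B}}\chi$, then $\Vdash^{*}_{\mathscr{B}}\chi$.
   Context: Fix a denumerable set $\mathbb{A}$ of atoms. IPL formulas are built from atoms and $\bot$ using $\wedge,\vee,\to$. An atomic rule has the form $(Q_1\triangleright q_1,\dots,Q_n\triangleright q_n)\Rightarrow q$ with $n\ge 0$, $q,q_i\in\mathbb{A}$, $Q_i$ finite sets of atoms; a base is a set of atomic rules. Derivability $\vdash_{\mathscr{B}}$ is the least relation with $S\cup\{q\}\vdash_{\mathscr{B}} q$, and if $(Q_1\triangleright q_1,\dots,Q_n\triangleright q_n)\Rightarrow q\in\mathscr{B}$ and $S\cup Q_i\vdash_{\mathscr{B}} q_i$ for all $i$ then $S\vdash_{\mathscr{B}} q$. $\Vdash^{*}_{\mathscr{B}}$ is defined inductively: $\Vdash^{*}_{\mathscr{B}}p$ iff $\emptyset\vdash_{\mathscr{B}}p$; $\Vdash^{*}_{\mathscr{B}}\varphi\to\psi$ iff $\varphi\Vdash^{*}_{\mathscr{B}}\psi$; $\Vdash^{*}_{\mathscr{B}}\varphi\wedge\psi$ iff for all $\mathscr{C}\supseteq\mathscr{B}$ and atoms $p$, $\varphi,\psi\Vdash^{*}_{\mathscr{C}}p$ implies $\Vdash^{*}_{\mathscr{C}}p$; $\Vdash^{*}_{\mathscr{B}}\varphi\vee\psi$ iff for all $\mathscr{C}\supseteq\mathscr{B}$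 and atoms $p$, if $\varphi\Vdash^{*}_{\mathscr{C}}p$ and $\psi\Vdash^{*}_{\mathscr{C}}p$ then $\Vdash^{*}_{\mathscr{C}}p$; $\Vdash^{*}_{\mathscr{B}}\bot$ iff $\Vdash^{*}_{\mathscr{B}}p$ for all atoms $p$; for nonempty finite $\Gamma$, $\Gamma\Vdash^{*}_{\mathscr{B}}\varphi$ iff for every $\mathscr{C}\supseteq\mathscr{B}$, if $\Vdash^{*}_{\mathscr{C}}\psi$ for all $\psi\in\Gamma$ then $\Vdash^{*}_{\mathscr{C}}\varphi$. *)

(* Defs.v *)
(* Base-extension semantics for IPL (Sandqvist-style). *)
From Stdlib Require Import List.
Import ListNotations.

Definition atom := nat.

Inductive form : Type :=
| Atom : atom -> form
| Bot : form
| And : form -> form -> form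
| Or : form -> form -> form
| Imp : form -> form -> form.

(* Atomic rule (Q_1 |> q_1, ..., Q_n |> q_n) => q ; finite sets of atoms
   are represented by lists (only membership matters). *)
Record rule : Type := mkRule {
  premises : list (list atom * atom);
  conclusion : atom }.

Definition base := rule -> Prop.

Definition extends (C B : base) : Prop := forall r, B r -> C r.

Inductive derives (B : base) : list atom -> atom -> Prop :=
| der_ref : forall S q, In q S -> derives B S q
| der_rule : forall S r, B r ->
    (forall pq, In pq (premises r) -> derives B (fst pq ++ S) (snd pq)) ->
    derives B S (conclusion r).

Fixpoint supp (B : base) (phi : form) : Prop :=
  match phi with
  | Atom p => derives B [] p
  | Bot => forall p : atom, derives B [] p
  | Imp a b => forall C, extends C B -> supp C a -> supp C b
  | And a b => forall C, extends C B -> forall p : atom,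
      (forall D, extends D C -> supp D a -> supp D b -> derives D [] p) ->
      derives C [] p
  | Or a b => forall C, extends C B -> forall p : atom,
      (forall D, extends D C -> supp D a -> derives D [] p) ->
      (forall D, extends D C -> supp D b -> derives D [] p) ->
      derives C [] p
  end.

Definition supp_ctx (B : base) (Gamma : list form) (phi : form) : Prop :=
  forall C, extends C B -> (forall g, In g Gamma -> supp C g) -> supp C phi.

(* Main.v *)
Require Import Defs.
From Stdlib Require Import List.
Import ListNotations.

Lemma derives_mono B C S q : extends C B -> derives B S q -> derives C S q.
Proof.
  intros HE H; induction H.
  - now apply der_ref.
  - apply der_rule; auto.
Qed.

Lemma ext_trans A B C : extends A B -> extends B C -> extends A C.
Proof. unfold extends; auto. Qed.

Lemma ext_refl B : extends B B.
Proof. unfold extends; auto. Qed.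

Lemma supp_mono f : forall B C, extends C B -> supp B f -> supp C f.
Proof.
  induction f; simpl; intros B C HE H.
  - eapply derives_mono; eauto.
  - intros p; eapply derives_mono; eauto.
  - intros D HD; apply H; eapply ext_trans; eauto.
  - intros D HD; apply H; eapply ext_trans; eauto.
  - intros D HD; apply H; eapply ext_trans; eauto.
Qed.

Lemma key phi psi chi : forall B, supp B (And phi psi) ->
  (forall C, extends C B -> supp C phi -> supp C psi -> supp C chi) -> supp B chi.
Proof.
  induction chi; intros B Hand Hc; simpl.
  - apply (Hand B (ext_refl B)). intros D HD Hp Hq. exact (Hc D HD Hp Hq).
  - intros p. apply (Hand B (ext_refl B)). intros D HD Hp Hq. exact (Hc D HD Hp Hq p).
  - intros C HC p H. apply (Hand C HC). intros D HD Hp Hq.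
    apply (Hc D (ext_trans _ _ _ HD HC) Hp Hq D (ext_refl D)).
    intros E HE Ha Hb. apply H; eauto using ext_trans.
  - intros C HC p H1 H2. apply (Hand C HC). intros D HD Hp Hq.
    apply (Hc D (ext_trans _ _ _ HD HC) Hp Hq D (ext_refl D)).
    + intros E HE Ha. apply H1; eauto using ext_trans.
    + intros E HE Ha. apply H2; eauto using ext_trans.
  - intros C HC Ha. apply IHchi2.
    + eapply supp_mono; eauto.
    + intros D HD Hp Hq.
      apply (Hc D (ext_trans _ _ _ HD HC) Hp Hq D (ext_refl D)).
      eapply supp_mono; eauto.
Qed.

Theorem mainTheorem4 (B : base) (phi psi chi : form) :
  supp B (And phi psi) -> supp_ctx B [phi; psi] chi -> supp B chi.
Proof.
  intros H1 H2. apply (key phi psi chi B H1).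
  intros C HC Hp Hq. apply H2; auto.
  intros g [<-|[<-|[]]]; auto.
Qed.
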